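(* If $G$ is an oriented graph derived from a Burling tree $(T,r,\ell,c)$, then $G$ can be derived from a Burling tree $(T',r',\ell',c')$ such that, for every $v\in V(T')$, $v\in V(G)$ if and only if $v$ is neither the root nor a last-born of $T'$. Moreover, for every arc $uv$ of $G$, $uv$ is a top (resp. bottom) arc of $G$ with respect to $T$ if and only if it is a top (resp. bottom) arc of $G$ with respect to $T'$.
   Context: Oriented graphs are finite, without loops, multiple arcs or pairs of opposite arcs. In a rooted tree $T$ with root $r$, each non-root vertex $v$ has a parent $p(v)$; children, leaves, ancestors and descendants are as usual. A branch is a sequence $v_1\dots v_k$ ($k\ge0$) with $v_i$ the parent of $v_{i+1}$; it starts at $v_1$. A Burling tree is a 4-tuple $(T,r,\ell,c)$: $T$ a rooted tree with root $r$; $\ell$ assigns to each non-leaf vertex $v$ one of its children $\ell(v)$ (the last-born of $v$); $c$ assigns to every vertex $v$ that is neither the root nor a last-born the vertex-set of a (possibly empty) branch starting at $\ell(p(v))$, and $c(v)=\emptyset$ if $v$ is the root or a last-born. The oriented graph fully derived from it has vertex-set $V(T)$ and an arc $uv$ iff $v\in c(u)$; an oriented graph is derived from the Burling tree if it is an induced subgraph of the fully derived one (so $V(G)\subseteq V(T)$). If $G$ is derived from $T$ and $uv$ is an arc of $G$, then all out-neighbors of $u$ lie on one branch of $T$; $uv$ is a top arc with respect to $T$ if $v$ is the out-neighbor of $u$ closest in $T$ to the root, and a bottom arc with respect to $T$ if $v$ is the out-neighbor of $u$ furthest in $T$ from the root. *)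

(* Defs.v *)
From mathcomp Require Import all_boot.
Set Implicit Arguments. Unset Strict Implicit. Unset Printing Implicit Defensive.

(* Vertices are labelled by natural numbers (an unbounded supply of labels,
   so that a new Burling tree may use fresh vertices). *)

Record btree := BTree {
  bvert : seq nat;
  broot : nat;
  bpar  : nat -> nat;         (* parent p(v), meaningful for v in V(T), v <> r *)
  blb   : nat -> nat;         (* last-born l(v), meaningful for non-leaves *)
  bc    : nat -> seq nat      (* c(v), read as a vertex set *)
}.

Section Defs.
Variable T : btree.

Definition children (v : nat) : seq nat :=
  [seq w <- bvert T | (w != broot T) && (bpar T w == v)].

Definition is_leaf (v : nat) : bool := nilp (children v).

Definition is_last_born (w : nat) : bool :=
  [&& w \in bvert T, w != broot T & w == blb T (bpar T w)].

Definition rooted_tree : Prop :=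
  [/\ broot T \in bvert T,
      (forall v, v \in bvert T -> v != broot T -> bpar T v \in bvert T) &
      (forall v, v \in bvert T -> exists n, iter n (bpar T) v = broot T)].

Definition is_branch (s : seq nat) : Prop :=
  match s with
  | [::] => True
  | x :: s' => x \in bvert T /\ all (fun y => y \in bvert T) s' /\
               path (fun a b => (b != broot T) && (bpar T b == a)) x s'
  end.

Definition burling_tree : Prop :=
  [/\ rooted_tree,
      (forall v, v \in bvert T -> ~~ is_leaf v -> blb T v \in children v) &
      (forall v, v \in bvert T ->
         if (v == broot T) || is_last_born v then bc T v =i [::]
         else exists s : seq nat,
                [/\ is_branch s, (match s with [::] => True
                                  | x :: _ => x = blb T (bpar T v) end)
                  & bc T v =i s])].

Definition full_arc (u v : nat) : bool :=
  [&& u \in bvert T, v \in bvert T & v \in bc T u].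

Definition dist_root (v : nat) (n : nat) : Prop :=
  iter n (bpar T) v = broot T /\ forall m, m < n -> iter m (bpar T) v <> broot T.

End Defs.

Record ograph := OGraph { gvert : seq nat; garc : rel nat }.

Definition derived_from (G : ograph) (T : btree) : Prop :=
  {subset gvert G <= bvert T} /\
  forall u v, garc G u v <->
    [/\ u \in gvert G, v \in gvert G & full_arc T u v].

Definition top_arc (G : ograph) (T : btree) (u v : nat) : Prop :=
  garc G u v /\ forall w n m, garc G u w -> dist_root T v n -> dist_root T w m -> n <= m.

Definition bottom_arc (G : ograph) (T : btree) (u v : nat) : Prop :=
  garc G u v /\ forall w n m, garc G u w -> dist_root T v n -> dist_root T w m -> m <= n.

(* Main.v *)
Require Import Defs.
From mathcomp Require Import all_boot zify.
Set Implicit Arguments. Unset Strict Implicit. Unset Printing Implicit Defensive.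

Ltac prune := repeat match goal with H : ?P |- _ =>
  lazymatch P with
  | is_true (_ <= _) => fail
  | is_true (_ < _) => fail
  | @eq nat _ _ => fail
  | is_true (~~ (@eq_op _ _ _)) => fail
  | is_true (@eq_op _ _ _) => fail
  | _ => clear H
  end end.
Ltac slia := prune; lia.

Lemma dist_uniq_g (T0 : btree) x n m : dist_root T0 x n -> dist_root T0 x m -> n = m.
Proof.
move=> [h1 h2] [h3 h4]; case: (ltngtP n m) => // h.
- by case: (h4 _ h).
- by case: (h2 _ h).
Qed.

Section S.
Variable T : btree.
Variable G : ograph.
Hypothesis hT : burling_tree T.
Hypothesis hG : derived_from G T.

Local Notation r := (broot T).
Local Notation p := (bpar T).
Local Notation lb := (blb T).
Local Notation V := (bvert T).
Local Notation inG x := (x \in gvert G).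

Lemma rootV : r \in V. Proof. by case: hT => -[]. Qed.
Lemma parV x : x \in V -> x != r -> p x \in V. Proof. by case: hT => -[] _ h _ _ _; apply: h. Qed.
Lemma reachr x : x \in V -> exists n, iter n p x = r. Proof. by case: hT => -[] _ _ h _ _; apply: h. Qed.
Lemma GV x : inG x -> x \in V. Proof. by case: hG => h _; apply: h. Qed.

Lemma dep_ex x : {n | x \in V -> dist_root T x n}.
Proof.
case hx: (x \in V); last by exists 0.
have ex : exists n, iter n p x == r by have [n hn] := reachr hx; exists n; apply/eqP.
exists (ex_minn ex) => _; case: ex_minnP => n /eqP hn hmin; split => // m hm /eqP hm'.
by have := hmin m hm'; slia.
Qed.

Definition dep x := sval (dep_ex x).
Lemma depP x : x \in V -> dist_root T x (dep x).
Proof. exact: (svalP (dep_ex x)). Qed.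

Lemma dist_uniq x n m : dist_root T x n -> dist_root T x m -> n = m.
Proof.
move=> [h1 h2] [h3 h4]; case: (ltngtP n m) => // h.
- by case: (h4 _ h).
- by case: (h2 _ h).
Qed.

Lemma dep0 x : x \in V -> (dep x == 0) = (x == r).
Proof.
move=> hx; have [h1 h2] := depP hx; apply/idP/idP.
- by move/eqP => e; rewrite e /= in h1; rewrite h1.
- move/eqP=> e; case: (dep x) h2 => // n h; by case: (h 0).
Qed.

Lemma depS x : x \in V -> x != r -> dep x = (dep (p x)).+1.
Proof.
move=> hx hr; have hp := parV hx hr.
have [h1 h2] := depP hx.
case E: (dep x) h1 h2 => [|n] h1 h2; first by rewrite /= in h1; rewrite h1 eqxx in hr.
congr S; apply: (dist_uniq _ (depP hp)); split; first by rewrite -iterSr.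
move=> m hm; rewrite -iterSr; apply: h2; slia.
Qed.

Lemma iterV x k : x \in V -> k <= dep x -> iter k p x \in V /\ dep (iter k p x) = dep x - k.
Proof.
move=> hx; elim: k => [|k IH] hk; first by rewrite subn0.
have [hV hd] := IH (ltnW hk).
have hne : iter k p x != r.
  by rewrite -dep0 // hd; slia.
rewrite iterS; split; first exact: parV.
have := depS hV hne; slia.
Qed.

Lemma iter_nr x k : x \in V -> k < dep x -> iter k p x != r.
Proof. move=> hx hk; have [hV hd] := iterV hx (ltnW hk); by rewrite -dep0 // hd; slia. Qed.

Definition prel := fun a b => (b != r) && (p b == a).

Lemma branch_up x s : x \in V -> all (fun y => y \in V) s -> path prel x s -> forall w, w \in x :: s ->
  exists j, [/\ iter j p w = x, dep w = dep x + j &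
     forall m, m <= j -> iter m p w \in x :: s].
Proof.
elim: s x => [|y s IH] x hx /=.
  move=> _ _ w; rewrite inE => /eqP ->; exists 0; split; rewrite ?addn0 //.
  by move=> m; rewrite leqn0 => /eqP ->; rewrite inE.
move=> /andP[hy hall] /andP[/andP[hyr /eqP hpy] hpath] w.
rewrite inE; case: (eqVneq w x) => [->|hwx] /= hw.
  exists 0; split; rewrite ?addn0 //.
  by move=> m; rewrite leqn0 => /eqP ->; rewrite inE eqxx.
have [j [h1 h2 h3]] := IH y hy hall hpath w hw.
have hdy := depS hy hyr; rewrite hpy in hdy.
exists j.+1; split; first by rewrite iterS h1.
  slia.
move=> m; rewrite leq_eqVlt; case/orP => [/eqP ->|hm].
  by rewrite iterS h1 hpy inE eqxx.
by rewrite inE (h3 m hm) orbT.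
Qed.

Lemma branch_anc x s : x \in V -> all (fun y => y \in V) s -> path prel x s ->
  forall w1 w2, w1 \in x :: s -> w2 \in x :: s -> dep w1 <= dep w2 ->
  exists m, iter m p w2 = w1 /\ dep w2 = dep w1 + m.
Proof.
elim: s x => [|y s IH] x hx /=.
  move=> _ _ w1 w2; rewrite !inE => /eqP -> /eqP -> _; by exists 0; rewrite addn0.
move=> /andP[hy hall] /andP[/andP[hyr /eqP hpy] hpath] w1 w2 hw1 hw2 hle.
have hall' : all (fun y => y \in V) (y :: s) by rewrite /= hy hall.
have hpath' : path prel x (y :: s) by rewrite /= /prel hyr hpy eqxx.
case: (eqVneq w1 x) => [->|h1].
  have [j [a b _]] := branch_up hx hall' hpath' hw2; by exists j.
move: hw1; rewrite inE (negbTE h1) /= => hw1.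
have hdy := depS hy hyr; rewrite hpy in hdy.
have [j1 [_ b1 _]] := branch_up hy hall hpath hw1.
case: (eqVneq w2 x) => [e|h2].
  rewrite e in hle; slia.
move: hw2; rewrite inE (negbTE h2) /= => hw2.
exact: (IH y hy hall hpath w1 w2 hw1 hw2 hle).
Qed.

Lemma branch_eq x s : x \in V -> all (fun y => y \in V) s -> path prel x s ->
  forall w1 w2, w1 \in x :: s -> w2 \in x :: s -> dep w1 = dep w2 -> w1 = w2.
Proof.
move=> hx ha hp w1 w2 h1 h2 e.
have [m [a b]] := branch_anc hx ha hp h1 h2 (eq_leq e).
have hm : m = 0 by slia.
by rewrite -a hm.
Qed.


Lemma bc_info u v : u \in V -> v \in bc T u ->
  [/\ u != r, ~~ is_last_born T u &
      exists s, is_branch T (lb (p u) :: s) /\ bc T u =i lb (p u) :: s].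
Proof.
move=> hu hv; case: hT => _ _ /(_ u hu).
case: ifP => [_ h|/negbT]; first by rewrite h in hv.
rewrite negb_or => /andP[h1 h2] [[|x s] [hb hx e]]; first by rewrite e in hv.
split => //; exists s; by rewrite -hx.
Qed.

Lemma lb_child u : u \in V -> u != r ->
  [/\ lb (p u) \in V, lb (p u) != r & p (lb (p u)) = p u].
Proof.
move=> hu hr; have hp := parV hu hr.
case: hT => _ /(_ (p u) hp) h _.
have : lb (p u) \in children T (p u).
  apply: h; rewrite /is_leaf; apply/nilP => e.
  have : u \in children T (p u) by rewrite mem_filter hr eqxx hu.
  by rewrite e.
by rewrite mem_filter => /andP[/andP[a /eqP b] c].
Qed.

Fixpoint cpn n x := if inG x then x.+1 else if n is n'.+1 then cpn n' (p x) else 0.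
Definition cp x := cpn (dep x) x.

Lemma cpS x : x \in V -> x != r -> cp x = if inG x then x.+1 else cp (p x).
Proof. by move=> hx hr; rewrite /cp (depS hx hr). Qed.

Definition anc g w := exists k, k <= dep w /\ iter k p w = g.

Lemma cpP x : x \in V -> cp x = 0 \/ exists g, [/\ cp x = g.+1, inG g & anc g x].
Proof.
move: {2}(dep x) (erefl (dep x)) => n; elim: n x => [|n IH] x hd hx.
  by rewrite /cp hd /=; case: ifP => h; [right; exists x; split => //; exists 0 | left].
have hr : x != r by rewrite -dep0 // hd.
rewrite (cpS hx hr); case: ifP => hg.
  by right; exists x; split => //; exists 0.
have hdp := depS hx hr; rewrite hd in hdp; case: hdp => hdp.
case: (IH (p x) (esym hdp) (parV hx hr)) => [->|[g [a b [k [c d]]]]]; first by left.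
right; exists g; split => //; exists k.+1; rewrite iterSr; split => //; slia.
Qed.

Lemma anc_trans a b c : b \in V -> c \in V -> anc a b -> anc b c -> anc a c.
Proof.
move=> hb hc [k [hk e]] [k' [hk' e']]; exists (k + k'); rewrite iterD e'; split => //.
have [_ h] := iterV hc hk'; rewrite e' in h; slia.
Qed.

Lemma foldr_max (s : seq nat) f x : x \in s -> f x <= foldr maxn 0 (map f s).
Proof.
elim: s => //= y s IH; rewrite inE => /orP[/eqP ->|h]; first exact: leq_maxl.
by apply: leq_trans (IH h) (leq_maxr _ _).
Qed.

Definition maxdep := foldr maxn 0 (map dep V).
Definition Mx := (foldr maxn 0 (map id V)).+1.
Lemma depmax x : x \in V -> dep x <= maxdep. Proof. exact: foldr_max. Qed.
Lemma ltMx x : x \in V -> x < Mx. Proof. by move=> h; rewrite ltnS (foldr_max id h). Qed.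
Lemma GMx x : inG x -> x < Mx. Proof. by move/GV/ltMx. Qed.


Definition B := 3 * maxdep + 6.
Definition node c i := Mx + (c * B + i).
Definition R := node 0 0.
Definition cx x := (x - Mx) %/ B.
Definition ix x := (x - Mx) %% B.
Definition bb x := (x == r) || is_last_born T x.
Definition ddG x := 3 * dep x + bb x.
Definition dd x := if x < Mx then ddG x else ix x.
Definition p' x :=
  if x < Mx then (if x == r then R else node (cp (p x)) (3 * dep (p x) + 2 + bb x))
  else match cx x with 0 => node 0 (ix x).-1
       | g.+1 => if ix x == (ddG g).+1 then g else node g.+1 (ix x).-1 end.
Definition l' x := if x < Mx then node x.+1 (ddG x).+1 else node (cx x) (ix x).+1.
Definition vld x := if x < Mx then inG x else
  match cx x with 0 => true | g.+1 => inG g && (ddG g < ix x) end.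
Definition Bd := Mx + (Mx.+1 * B).
Definition bv' := [seq x <- iota 0 Bd | vld x].
Definition isanc x w := has (fun k => iter k p' w == x) (iota 0 (dd w).+1).
Definition Nl u := if inG u then [seq w <- gvert G | w \in bc T u] else [::].
Definition bc' u := [seq x <- bv' | isanc (l' (p' u)) x && has (isanc x) (Nl u)].
Definition T' := BTree bv' R p' l' bc'.

Lemma Bpos : 0 < B. Proof. rewrite /B; slia. Qed.

Lemma node_lt c i : (node c i < Mx) = false.
Proof. rewrite /node; apply/negbTE; rewrite -leqNgt; exact: leq_addr. Qed.

Lemma cx_node c i : i < B -> cx (node c i) = c.
Proof. by move=> hi; rewrite /cx /node addKn divnMDl ?Bpos // divn_small // addn0. Qed.
Lemma ix_node c i : i < B -> ix (node c i) = i.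
Proof. by move=> hi; rewrite /ix /node addKn modnMDl modn_small. Qed.
Lemma ix_lt x : ix x < B. Proof. by rewrite /ix ltn_mod Bpos. Qed.

Lemma node_eta x : Mx <= x -> node (cx x) (ix x) = x.
Proof. by move=> h; rewrite /node /cx /ix -divn_eq subnKC. Qed.

Lemma node_inj c i c' i' : i < B -> i' < B -> node c i = node c' i' -> c = c' /\ i = i'.
Proof.
move=> h h' e; split; first by rewrite -(cx_node c h) e cx_node.
by rewrite -(ix_node c h) e ix_node.
Qed.

Lemma dd_node c i : i < B -> dd (node c i) = i.
Proof. by move=> h; rewrite /dd node_lt ix_node. Qed.

Lemma vld_node c i : i < B -> vld (node c i) =
  match c with 0 => true | g.+1 => inG g && (ddG g < i) end.
Proof. by move=> h; rewrite /vld node_lt cx_node // ix_node. Qed.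

Lemma vld_Bd x : vld x -> x < Bd.
Proof.
rewrite /vld /Bd; case: ltnP => hx.
  by move=> _; apply: leq_trans hx (leq_addr _ _).
have eta := node_eta hx.
have hi := ix_lt x.
case E: (cx x) => [|g] hv.
  by rewrite -eta E /node mul0n add0n ltn_add2l; apply: leq_trans hi _; rewrite leq_pmull.
case/andP: hv => hg _; have hgM := GMx hg.
rewrite -eta E /node ltn_add2l; apply: (@leq_trans (g.+1 * B + B)); first by rewrite ltn_add2l.
by rewrite -mulSnr leq_mul2r ltnS hgM orbT.
Qed.

Lemma mem_bv' x : (x \in bv') = vld x.
Proof.
rewrite mem_filter mem_iota add0n /=; apply/idP/idP => [/andP[]//|h].
by rewrite h vld_Bd.
Qed.

Lemma bb_nr x : x != r -> bb x = is_last_born T x.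
Proof. by rewrite /bb => /negbTE ->. Qed.

Lemma depr : dep r = 0. Proof. by apply/eqP; rewrite dep0 ?rootV. Qed.

Lemma ddG_ge1 g : g \in V -> 0 < ddG g.
Proof.
move=> hg; rewrite /ddG; case: (eqVneq g r) => [->|h].
  by rewrite /bb eqxx; slia.
have : dep g != 0 by rewrite dep0 // h.
slia.
Qed.

Lemma ddG_le g : ddG g <= 3 * dep g + 1.
Proof. by rewrite /ddG; case: (bb g); slia. Qed.

Lemma B_big y : y \in V -> 3 * dep y + 5 < B.
Proof. move=> /depmax; rewrite /B; slia. Qed.

Lemma R_lt : (R < Mx) = false. Proof. exact: node_lt. Qed.
Lemma vldR : vld R. Proof. by rewrite /R vld_node ?Bpos. Qed.
Lemma ddR : dd R = 0. Proof. by rewrite /R dd_node ?Bpos. Qed.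

Lemma step x : vld x -> x != R -> vld (p' x) /\ dd (p' x) = (dd x).-1.
Proof.
rewrite /vld /p' /dd; case: ltnP => hx.
  move=> hg _; case: (eqVneq x r) => [e|hr].
    rewrite -/(vld R) -/(dd R) vldR ddR; split => //.
    by rewrite /ddG e depr /bb eqxx.
  have hxV := GV hg; have hp := parV hxV hr; have hd := depS hxV hr.
  have hi : 3 * dep (p x) + 2 + bb x < B by have := B_big hp; case: (bb x); slia.
  rewrite -/(vld _) -/(dd _) vld_node // dd_node //; split; last by rewrite /ddG hd; slia.
  case: (cpP hp) => [->|[g [-> hg' [k [hk e]]]]] //.
  rewrite hg' /=; have [_ h] := iterV hp hk; rewrite e in h.
  have := ddG_le g; case: (bb x); slia.
have hi := ix_lt x.
move=> hv hR; have eta := node_eta hx.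
case E: (cx x) hv => [|g] hv.
  have hi0 : ix x != 0 by apply: contraNneq hR => e; rewrite -eta E e.
  rewrite -/(vld _) -/(dd _) vld_node ?dd_node //; last by slia.
  by rewrite (leq_ltn_trans (leq_pred _) hi).
case/andP: hv => hg hlt.
case: (eqVneq (ix x) (ddG g).+1) => [e|ne].
  by rewrite -/(vld g) -/(dd g) /vld /dd GMx // hg e.
rewrite -/(vld _) -/(dd _) vld_node ?dd_node; last by rewrite (leq_ltn_trans (leq_pred _) hi).
  by rewrite hg /=; split => //; slia.
by slia.
Qed.


Lemma dd0 x : vld x -> (dd x == 0) = (x == R).
Proof.
rewrite /vld /dd; case: ltnP => hx.
  move=> hg; have := ddG_ge1 (GV hg).
  have : x != R by apply/eqP => e; rewrite e R_lt in hx.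
  by move/negbTE => ->; case: (ddG x).
have eta := node_eta hx; have hi := ix_lt x.
case E: (cx x) => [|g].
  move=> _; apply/idP/idP => [/eqP e|/eqP e].
    by rewrite -eta E e.
  by rewrite e /R ix_node ?Bpos.
move=> /andP[_ h]; have -> : (x == R) = false.
  apply/negbTE/eqP => e; move: E; rewrite e /R cx_node ?Bpos //.
by case: (ix x) h.
Qed.

Lemma iterv x k : vld x -> k <= dd x -> vld (iter k p' x) /\ dd (iter k p' x) = dd x - k.
Proof.
move=> hx; elim: k => [|k IH] hk; first by rewrite subn0.
have [hv hd] := IH (ltnW hk).
have hne : iter k p' x != R by rewrite -dd0 // hd; slia.
rewrite iterS; have [a b] := step hv hne; split => //; slia.
Qed.

Lemma iter_root x : vld x -> iter (dd x) p' x = R.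
Proof. move=> hx; have [a b] := iterv hx (leqnn _); apply/eqP; by rewrite -dd0 ?a // b subnn. Qed.

Definition spok c j := if c is g.+1 then ddG g < j else true.

Lemma spine c i j : i < B -> j <= i -> spok c j -> iter (i - j) p' (node c i) = node c j.
Proof.
move=> hi hji hs.
have : forall d, j + d < B -> iter d p' (node c (j + d)) = node c j.
  elim => [|d IH] hd; first by rewrite addn0.
  rewrite iterSr.
  have -> : p' (node c (j + d.+1)) = node c (j + d).
    rewrite /p' node_lt cx_node // ix_node //; clear IH; case: c hs => [|g] /= hs; first by rewrite addnS.
    have -> : (j + d.+1 == (ddG g).+1) = false by apply/negbTE; slia.
    by rewrite addnS.
  by apply: IH; slia.
move/(_ (i - j)); rewrite subnKC //; apply; done.
Qed.

Lemma spine_head g i : inG g -> ddG g < i -> i < B -> iter (i - ddG g) p' (node g.+1 i) = g.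
Proof.
move=> hg h1 h2; have -> : i - ddG g = (i - (ddG g).+1).+1 by slia.
rewrite iterS spine //= /p' node_lt cx_node ?ix_node ?eqxx //; slia.
Qed.

Lemma cp_G x : inG x -> cp x = x.+1.
Proof. by rewrite /cp; case: (dep x) => [|n] /= ->. Qed.

Lemma climb t : inG t -> forall k, k <= dep t ->
  (inG (iter k p t) -> iter (ddG t - ddG (iter k p t)) p' t = iter k p t) /\
  (k < dep t -> iter (ddG t - (3 * dep (iter k.+1 p t) + 2 + bb (iter k p t))) p' t =
     node (cp (iter k.+1 p t)) (3 * dep (iter k.+1 p t) + 2 + bb (iter k p t))).
Proof.
move=> ht; have tV := GV ht.
have Bk : forall k, k < dep t -> inG (iter k p t) ->
   iter (ddG t - ddG (iter k p t)) p' t = iter k p t ->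
   iter (ddG t - (3 * dep (iter k.+1 p t) + 2 + bb (iter k p t))) p' t =
     node (cp (iter k.+1 p t)) (3 * dep (iter k.+1 p t) + 2 + bb (iter k p t)).
  move=> k hk hg e; set x := iter k p t.
  have [xV dx] := iterV tV (ltnW hk).
  have hxr : x != r by apply: iter_nr.
  have dxp := depS xV hxr.
  rewrite -/x in xV dx dxp.
  have hk0 : ddG x <= ddG t.
    case: (posnP k) => [k0|kp]; first by rewrite /x k0.
    have := ddG_le x; rewrite /ddG; case: (bb t); slia.
  have -> : ddG t - (3 * dep (iter k.+1 p t) + 2 + bb x) = (ddG t - ddG x).+1.
    rewrite iterS -/x; move: hk0; rewrite /ddG dxp; case: (bb x); case: (bb t); slia.
  by rewrite iterS e /p' (GMx hg) (negbTE hxr) -iterS.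
elim => [|k IH] hk.
  split; first by rewrite subnn.
  by move=> hk'; apply: Bk => //; rewrite subnn.
have [_ IHB] := IH (ltnW hk).
have IHB' := IHB hk.
set x := iter k.+1 p t in IHB' *.
have [xV dx] := iterV tV hk.
rewrite -/x in xV dx.
have Ak : inG x -> iter (ddG t - ddG x) p' t = x.
  move=> hg; move: IHB'; rewrite (cp_G hg) => e.
  set i := 3 * dep x + 2 + bb (iter k p t) in e.
  have hi : i < B by have := B_big xV; rewrite /i; case: (bb _); slia.
  have hle : ddG x < i by have := ddG_le x; rewrite /i; slia.
  have hit : i <= ddG t by rewrite /i /ddG; move: dx; case: (bb _); case: (bb t); slia.
  apply: etrans _ (spine_head hg hle hi); rewrite -e -iterD; congr iter; slia.
split => // hk'.
case hg: (inG x); first by apply: Bk => //; apply: Ak.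
have hxr : x != r by apply: iter_nr.
have dxp := depS xV hxr.
have hpV := parV xV hxr.
rewrite -/x in dxp hpV.
rewrite (cpS xV hxr) hg in IHB'.
rewrite [iter k.+2 p t]iterS -/x.
set i := 3 * dep (p x) + 2 + bb x.
set i0 := 3 * dep x + 2 + bb (iter k p t) in IHB'.
have hi0 : i0 < B by have := B_big xV; rewrite /i0; case: (bb _); slia.
have hii : i <= i0 by rewrite /i /i0 dxp; case: (bb x); case: (bb (iter k p t)); slia.
have hs : spok (cp (p x)) i.
  case: (cpP hpV) => [->|[g [-> hg' [kk [hkk e]]]]] //=.
  have [_ h] := iterV hpV hkk; rewrite e in h.
  have := ddG_le g; rewrite /i; case: (bb x); slia.
have hit : i0 <= ddG t by rewrite /i0 /ddG; move: dx; case: (bb _); case: (bb t); slia.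
rewrite -(spine hi0 hii hs) -IHB' -iterD; congr iter; slia.
Qed.


Lemma ddG_dd x : x < Mx -> dd x = ddG x. Proof. by rewrite /dd => ->. Qed.

Lemma isancP x w : reflect (exists k, k <= dd w /\ iter k p' w = x) (isanc x w).
Proof.
apply: (iffP hasP) => [[k] |[k [hk e]]].
  by rewrite mem_iota add0n ltnS => hk /eqP e; exists k.
by exists k; rewrite ?mem_iota ?add0n ?ltnS ?hk ?e.
Qed.

Lemma anc1 x : x \in V -> x != r -> anc (p x) x.
Proof. move=> hx hr; exists 1; split => //; by rewrite (depS hx hr). Qed.

Lemma up_inv w : inG w -> forall m, m <= ddG w ->
  (iter m p' w < Mx -> inG (iter m p' w) /\ anc (iter m p' w) w) /\
  (Mx <= iter m p' w -> cx (iter m p' w) = 0 \/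
      exists g, [/\ cx (iter m p' w) = g.+1, inG g & anc g w]).
Proof.
move=> hw; have wV := GV hw; have hvw : vld w by rewrite /vld GMx.
have hdw : dd w = ddG w by rewrite ddG_dd // GMx.
elim => [|m IH] hm.
  split => [_|/=]; first by split => //; exists 0.
  by rewrite leqNgt GMx.
have [IH1 IH2] := IH (ltnW hm).
have [xv xd] := iterv hvw (ltnW (leq_trans hm (eq_leq (esym hdw)))).
set x := iter m p' w in IH1 IH2 xv xd *.
rewrite iterS -/x.
have hxR : x != R by rewrite -dd0 // xd hdw; slia.
move: xv; rewrite /vld; case: ltnP => hx.
  move=> hgx; have [_ ha] := IH1 hx; have xV := GV hgx.
  rewrite /p' hx; case: (eqVneq x r) => [_|hr].
    split; first by rewrite R_lt.
    by move=> _; left; rewrite /R cx_node ?Bpos.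
  have hpV := parV xV hr.
  have hi : 3 * dep (p x) + 2 + bb x < B by have := B_big hpV; case: (bb x); slia.
  split; first by rewrite node_lt.
  move=> _; rewrite cx_node //.
  case: (cpP hpV) => [->|[g [-> hg hga]]]; first by left.
  right; exists g; split => //.
  apply: anc_trans hga (anc_trans _ _ (anc1 xV hr) ha) => //.
have hi := ix_lt x.
case: (IH2 hx) => [E|[g [E hg hga]]]; rewrite /p' (ltnNge x Mx) hx /= E.
  move=> _; have hi' : (ix x).-1 < B by rewrite (leq_ltn_trans (leq_pred _) hi).
  by split; [rewrite node_lt | move=> _; left; rewrite cx_node].
move=> /andP[_ hlt]; case: eqP => _.
  by split => [_|]; [ | rewrite leqNgt GMx]. 
have hi' : (ix x).-1 < B by rewrite (leq_ltn_trans (leq_pred _) hi).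
by split; [rewrite node_lt | move=> _; right; exists g; rewrite cx_node].
Qed.

Lemma Ganc v w : inG v -> inG w -> isanc v w -> anc v w.
Proof.
move=> hv hw /isancP [k [hk e]]; rewrite ddG_dd ?GMx // in hk.
by have [/(_ _) [] ] := up_inv hw hk; rewrite e // GMx.
Qed.

Lemma anc_isanc v w : inG v -> inG w -> anc v w -> iter (ddG w - ddG v) p' w = v.
Proof.
move=> hv hw [k [hk e]]; have [h _] := climb hw hk.
by rewrite -e; apply: h; rewrite e.
Qed.


Lemma lp'u u : inG u -> u != r -> ~~ is_last_born T u ->
  l' (p' u) = node (cp (p u)) (3 * dep (p u) + 3).
Proof.
move=> hu hr hl; have uV := GV hu; have hpV := parV uV hr.
have hi : 3 * dep (p u) + 2 + bb u < B by have := B_big hpV; case: (bb u); slia.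
rewrite /p' GMx // (negbTE hr) /l' node_lt cx_node // ix_node // bb_nr // (negbTE hl).
by congr node; rewrite addn0; slia.
Qed.

Lemma lb_bb u : u \in V -> u != r -> bb (lb (p u)) = true.
Proof.
move=> hu hr; have [a b c] := lb_child hu hr.
by rewrite bb_nr // /is_last_born a b c eqxx.
Qed.

Lemma z_dd u : u \in V -> u != r -> dd (node (cp (p u)) (3 * dep (p u) + 3)) = 3 * dep (p u) + 3.
Proof. move=> hu hr; apply: dd_node; have := B_big (parV hu hr); slia. Qed.

Lemma arc_eq u v : inG u -> inG v -> (v \in bc T u) = (v \in bc' u).
Proof.
move=> hu hv; have uV := GV hu; have vV := GV hv.
rewrite /bc' mem_filter mem_bv' /vld GMx // hv /=.
apply/idP/idP.
  move=> hvc; have [hr hl [s [hb e]]] := bc_info uV hvc.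
  have [lV lr lp] := lb_child uV hr.
  case: hb => _ [hall hpath].
  have hvs : v \in lb (p u) :: s by rewrite -e.
  have [j [hj hdj _]] := branch_up lV hall hpath hvs.
  have hdl := depS lV lr; rewrite lp -(depS uV hr) in hdl.
  have hjd : j < dep v by have := depS uV hr; slia.
  have [_ /(_ hjd)] := climb hv (ltnW hjd).
  rewrite iterS hj lp (lb_bb uV hr) -addnA -(lp'u hu hr hl) andbT => hz.
  apply/andP; split.
    apply/isancP; eexists; split; last exact: hz.
    by rewrite ddG_dd ?GMx // leq_subr.
  apply/hasP; exists v; first by rewrite /Nl hu mem_filter hv hvc.
  by apply/isancP; exists 0.
rewrite andbT => /andP[/isancP [a [ha ea]] /hasP [w]]; rewrite /Nl hu mem_filter => /andP[hwc hw].
move=> /(Ganc hv hw) [m [hm em]].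
have [hr hl [s [hb e]]] := bc_info uV hwc.
have [lV lr lp] := lb_child uV hr.
case: hb => _ [hall hpath].
have hws : w \in lb (p u) :: s by rewrite -e.
have [j [hj hdj hin]] := branch_up lV hall hpath hws.
have hdl := depS lV lr; rewrite lp -(depS uV hr) in hdl.
have vvld : vld v by rewrite /vld GMx.
have [_ hdz] := iterv vvld ha.
rewrite ea (lp'u hu hr hl) (z_dd uV hr) (ddG_dd (GMx hv)) in hdz.
have wV := GV hw.
have [_ hdv] := iterV wV hm; rewrite em in hdv.
have hdu := depS uV hr.
have hmj : m <= j.
  move: hdz hdv hdu hdl hdj; rewrite /ddG.
  move: (dep v) (dep w) (dep u) (dep (p u)) (dep (lb (p u))) (bb v) => a1 a2 a3 a4 a5 b.
  move=> {hin e hpath hall hws hj em}; case: b; slia.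
by rewrite e -em hin.
Qed.


Fixpoint up k x := match k with 0 => [:: x] | k'.+1 => iter k p' x :: up k' x end.

Lemma up_head k x : up k x = iter k p' x :: behead (up k x).
Proof. by case: k. Qed.

Lemma mem_up k x y : reflect (exists i, i <= k /\ iter i p' x = y) (y \in up k x).
Proof.
elim: k => [|k IH] /=.
  rewrite inE; apply: (iffP eqP) => [->|[i [hi <-]]]; first by exists 0.
  by move: hi; rewrite leqn0 => /eqP ->.
rewrite inE; apply: (iffP orP) => [[/eqP ->|/IH [i [hi e]]]|[i [hi e]]].
- by exists k.+1.
- by exists i; split => //; apply: leqW.
move: hi; rewrite leq_eqVlt => /orP[/eqP ei|hi]; first by left; rewrite -e ei.
by right; apply/IH; exists i.
Qed.

Lemma up_path k x : vld x -> k <= dd x ->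
  path (fun a b => (b != R) && (p' b == a)) (iter k p' x) (behead (up k x)).
Proof.
move=> hx; elim: k => [|k IH] hk //=.
rewrite [up k x]up_head /= IH ?(ltnW hk) // andbT.
have [a b] := iterv hx (ltnW hk).
by rewrite -dd0 // b eqxx andbT; apply/eqP; slia.
Qed.

Lemma up_branch k x : vld x -> k <= dd x -> is_branch T' (up k x).
Proof.
move=> hx hk; rewrite up_head /=; split; first by rewrite mem_bv'; case: (iterv hx hk).
split; last exact: up_path.
apply/allP => y hy; have : y \in up k x by rewrite up_head inE hy orbT.
by move/mem_up => [i [hi <-]]; rewrite mem_bv'; case: (iterv hx (leq_trans hi hk)).
Qed.

Lemma max_in (l : seq nat) (f : nat -> nat) : l != [::] ->
  exists t, t \in l /\ forall w, w \in l -> f w <= f t.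
Proof.
elim: l => // a l IH _; case: (eqVneq l [::]) => [->|hl].
  by exists a; split => [|w]; rewrite ?inE // => /eqP ->.
have [t [ht hm]] := IH hl.
case: (leqP (f a) (f t)) => h.
  exists t; split; first by rewrite inE ht orbT.
  by move=> w; rewrite inE => /orP[/eqP ->|/hm].
exists a; split; first by rewrite inE eqxx.
move=> w; rewrite inE => /orP[/eqP ->//|/hm hw]; slia.
Qed.

Lemma l'_ge x : Mx <= l' x.
Proof. by rewrite /l'; case: ifP => _; rewrite /node leq_addr. Qed.

Lemma ix_par w : vld w -> Mx <= p' w -> (ix (p' w)).+1 < B.
Proof.
rewrite /vld /p'; case: ltnP => hx.
  move=> hg; case: (eqVneq w r) => [_ _|hr _].
    by rewrite /R ix_node ?Bpos //; rewrite /B; slia.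
  have hpV := parV (GV hg) hr.
  have hi : 3 * dep (p w) + 2 + bb w < B.-1 by have := B_big hpV; rewrite /B; case: (bb w); slia.
  by rewrite ix_node; rewrite /B in hi *; slia.
have hi := ix_lt w.
case: (cx w) => [|g] /=.
  by move=> _ _; rewrite ix_node; rewrite /B in hi *; slia.
move=> /andP[hg _]; case: eqP => _.
  by rewrite leqNgt GMx.
by move=> _; rewrite ix_node; rewrite /B in hi *; slia.
Qed.

Lemma distT' x : vld x -> dist_root T' x (dd x).
Proof.
move=> hx; split; first exact: iter_root.
move=> m hm; have [a b] := iterv hx (ltnW hm).
by move/eqP; rewrite /= -dd0 // b; slia.
Qed.


Lemma notlb_G v : v < Mx -> ~~ ((v == R) || is_last_born T' v).
Proof.
move=> hv; rewrite negb_or; apply/andP; split.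
  by apply/eqP => e; rewrite e R_lt in hv.
rewrite /is_last_born /=; apply/negP => /and3P[_ _ /eqP e].
by have := l'_ge (p' v); rewrite -e leqNgt hv.
Qed.

Lemma burT' : burling_tree T'.
Proof.
split.
- split => /=.
  + by rewrite mem_bv' vldR.
  + by move=> v; rewrite !mem_bv' => hv hR; case: (step hv hR).
  + by move=> v; rewrite mem_bv' => hv; exists (dd v); apply: iter_root.
- move=> v; rewrite /= mem_bv' => hv.
  rewrite /is_leaf; case E: (children T' v) => [|w ws] // _.
  have : w \in children T' v by rewrite E inE eqxx.
  rewrite mem_filter mem_bv' /= => /andP[/andP[hwR /eqP hpw] hw].
  rewrite -E /children /= mem_filter mem_bv'.
  case: (ltnP v Mx) => hx.
    have hg : inG v by move: hv; rewrite /vld hx.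
    rewrite /l' hx.
    have hi : (ddG v).+1 < B by have := ddG_le v; have := B_big (GV hg); slia.
    rewrite vld_node // hg /= ltnSn andbT.
    rewrite /p' node_lt cx_node // ix_node // !eqxx andbT.
    by apply/eqP => /node_inj [] //; rewrite Bpos.
  have eta := node_eta hx.
  have hi : (ix v).+1 < B by rewrite -hpw; apply: ix_par => //; rewrite hpw.
  have hv' := hv; rewrite /vld (ltnNge v Mx) hx /= in hv'.
  rewrite /l' (ltnNge v Mx) hx /=.
  rewrite vld_node //.
  case E2: (cx v) hv' => [|g] /=.
    move=> _.
    have e0 : p' (node 0 (ix v).+1) = v by rewrite /p' node_lt cx_node // ix_node //= -[RHS]eta E2.
    by rewrite e0 eqxx !andbT; apply/eqP => /node_inj [] //; rewrite ?Bpos.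
  move=> /andP[hg hlt]; rewrite hg ltnS (ltnW hlt) !andbT.
  have e0 : p' (node g.+1 (ix v).+1) = v.
    by rewrite /p' node_lt cx_node // ix_node //= eqSS (gtn_eqF hlt) -[RHS]eta E2.
  by rewrite e0 eqxx !andbT; apply/eqP => /node_inj [] //; rewrite ?Bpos.
- move=> v; rewrite /= mem_bv' => hv.
  case hN: (Nl v) => [|w0 ws].
    have h0 : bc' v =i [::] by move=> x; rewrite /bc' hN mem_filter /= andbF.
    by case: ifP => // _; exists [::]; split.
  have hgv : inG v by move: hN; rewrite /Nl; case: ifP.
  have hxv := GMx hgv; have vV := GV hgv.
  rewrite (negbTE (notlb_G hxv)).
  have hnil : Nl v != [::] by rewrite hN.
  have [t [ht hmax]] := max_in dep hnil.
  move: (ht); rewrite /Nl hgv mem_filter => /andP[htc hgt].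
  have [hr hl [s [hb e]]] := bc_info vV htc.
  have [lV lr lp] := lb_child vV hr.
  case: hb => _ [hall hpath].
  have hts : t \in lb (p v) :: s by rewrite -e.
  have [j [hj hdj hin]] := branch_up lV hall hpath hts.
  have hdl := depS lV lr; rewrite lp -(depS vV hr) in hdl.
  have tV := GV hgt.
  have hjd : j < dep t by have := depS vV hr; slia.
  have [_ /(_ hjd)] := climb hgt (ltnW hjd).
  rewrite iterS hj lp (lb_bb vV hr) -addnA -(lp'u hgv hr hl) => hz.
  set k0 := ddG t - (3 * dep (p v) + 3) in hz.
  have htv : vld t by rewrite /vld GMx.
  have hdt : dd t = ddG t by rewrite ddG_dd // GMx.
  have hk0 : k0 <= dd t by rewrite hdt leq_subr.
  exists (up k0 t); split.
  + exact: up_branch.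
  + by rewrite up_head /= hz.
  move=> x; apply/idP/idP.
    rewrite /bc' mem_filter mem_bv' => /andP[/andP[/isancP [a [ha ea]] /hasP [w hw /isancP [b [hb eb]]]] hx].
    move: (hw); rewrite /Nl hgv mem_filter => /andP[hwc hgw].
    have hws : w \in lb (p v) :: s by rewrite -e.
    have hwt := hmax w hw.
    have [m [hm hdm]] := branch_anc lV hall hpath hws hts hwt.
    have wt : iter (ddG t - ddG w) p' t = w.
      by apply: anc_isanc => //; exists m; split => //; slia.
    have hddw : ddG w <= ddG t.
      case: (posnP m) => [m0|mp]; first by rewrite -hm m0.
      by have := ddG_le w; rewrite /ddG; case: (bb t); slia.
    have hwv : vld w by rewrite /vld GMx.
    have hdw : dd w = ddG w by rewrite ddG_dd // GMx.
    have [_ hdx] := iterv hwv hb; rewrite eb hdw in hdx.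
    have [_ hdz] := iterv hx ha; rewrite ea (lp'u hgv hr hl) (z_dd vV hr) in hdz.
    apply/mem_up; exists (b + (ddG t - ddG w)); split.
      rewrite /k0; move: hdx hdz hddw hb; rewrite hdw.
      move: (dd x) (ddG t) (ddG w) => d1 d2 d3; slia.
    by rewrite iterD wt.
  move/mem_up => [i [hi <-]].
  have [hxv' hdx] := iterv htv (leq_trans hi hk0).
  rewrite /bc' mem_filter mem_bv' hxv' andbT; apply/andP; split.
    apply/isancP; exists (k0 - i); split; first by rewrite hdx; slia.
    by rewrite -iterD subnK.
  apply/hasP; exists t => //; apply/isancP; exists i; split => //.
  exact: leq_trans hi hk0.
Qed.


Lemma derT' : derived_from G T'.
Proof.
split; first by move=> x hx; rewrite /= mem_bv' /vld GMx.
move=> u v; have [_ h] := hG; rewrite h; split => -[hu hv hf]; split => //.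
  move: hf; rewrite /full_arc /= !mem_bv' /vld !GMx // hu hv /= => /andP[_ /andP[_ hf]].
  by rewrite -arc_eq.
move: hf; rewrite /full_arc /= !mem_bv' /vld !GMx // hu hv /= => hf.
by rewrite !GV //= arc_eq.
Qed.

Lemma cond3 v : v \in bvert T' -> (inG v <-> ~~ ((v == broot T') || is_last_born T' v)).
Proof.
rewrite /= mem_bv' => hv; case: (ltnP v Mx) => hx.
  have hg : inG v by move: hv; rewrite /vld hx.
  by split => // _; apply: notlb_G.
have hng : inG v = false by apply/negbTE/negP => /GMx; rewrite ltnNge hx.
rewrite hng; split => // /negP []; case: (eqVneq v R) => //= hR.
rewrite /is_last_born /= mem_bv' hv hR /=.
have eta := node_eta hx; have hi := ix_lt v.
have hv' := hv; rewrite /vld (ltnNge v Mx) hx /= in hv'.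
rewrite /p' (ltnNge v Mx) hx /=.
case E: (cx v) hv' => [|g] /=.
  move=> _; have hi0 : ix v != 0 by apply: contraNneq hR => e; rewrite -eta E e.
  have hi' : (ix v).-1 < B by rewrite (leq_ltn_trans (leq_pred _) hi).
  rewrite /l' node_lt cx_node // ix_node // prednK ?lt0n //.
  by rewrite -[X in X == _]eta E.
move=> /andP[hg hlt]; case: (eqVneq (ix v) (ddG g).+1) => e.
  by rewrite /l' (GMx hg) -e -[X in X == _]eta E.
have hi' : (ix v).-1 < B by rewrite (leq_ltn_trans (leq_pred _) hi).
rewrite /l' node_lt cx_node // ix_node // prednK; last by slia.
by rewrite -[X in X == _]eta E.
Qed.

Lemma cmp u v w : inG u -> inG v -> inG w -> v \in bc T u -> w \in bc T u ->
  (dep v <= dep w) = (ddG v <= ddG w).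
Proof.
move=> hu hv hw hvc hwc; have uV := GV hu.
have [hr hl [s [hb e]]] := bc_info uV hvc.
have [lV lr lp] := lb_child uV hr.
case: hb => _ [hall hpath].
have hvs : v \in lb (p u) :: s by rewrite -e.
have hws : w \in lb (p u) :: s by rewrite -e.
case: (ltngtP (dep v) (dep w)) => h.
- by have := ddG_le v; rewrite /ddG; case: (bb w); slia.
- by have := ddG_le w; rewrite /ddG; case: (bb v); slia.
- by rewrite (branch_eq lV hall hpath hvs hws h) leqnn.
Qed.

Lemma arcG u v : garc G u v -> [/\ inG u, inG v & v \in bc T u].
Proof. by case: hG => _ h /h [hu hv /and3P[_ _ hf]]. Qed.

Lemma arcG2 u w : garc G u w -> inG w.
Proof. by case/arcG. Qed.

Lemma topbot u v : garc G u v ->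
  (top_arc G T u v <-> top_arc G T' u v) /\ (bottom_arc G T u v <-> bottom_arc G T' u v).
Proof.
move=> huv; have [hu hv hvc] := arcG huv.
have vV := GV hv.
have hvv : vld v by rewrite /vld GMx.
have ddv : dd v = ddG v by rewrite ddG_dd // GMx.
have key : forall w, garc G u w -> (dep v <= dep w) = (ddG v <= ddG w) /\
     (dep w <= dep v) = (ddG w <= ddG v).
  move=> w /arcG [_ hw hwc]; split; [exact: (cmp hu hv hw hvc hwc) | exact: (cmp hu hw hv hwc hvc)].
have dT : forall w n, garc G u w -> dist_root T w n -> n = dep w.
  move=> w n /arcG [_ hw _] hd; exact: dist_uniq hd (depP (GV hw)).
have dT' : forall w n, garc G u w -> dist_root T' w n -> n = ddG w.
  move=> w n /arcG [_ hw _] hd.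
  have hwv : vld w by rewrite /vld GMx.
  by rewrite (dist_uniq_g hd (distT' hwv)) ddG_dd // GMx.
split; split => -[_ H]; split => // w n m hw hn hm.
- rewrite (dT' _ _ huv hn) (dT' _ _ hw hm) -(key w hw).1.
  by apply: H hw (depP vV) (depP (GV (arcG2 hw))).
- rewrite (dT _ _ huv hn) (dT _ _ hw hm) (key w hw).1.
  have hwG := arcG2 hw; have hwv : vld w by rewrite /vld GMx.
  have := H w (dd v) (dd w) hw (distT' hvv) (distT' hwv).
  by rewrite ddv ddG_dd // GMx.
- rewrite (dT' _ _ huv hn) (dT' _ _ hw hm) -(key w hw).2.
  by apply: H hw (depP vV) (depP (GV (arcG2 hw))).
- rewrite (dT _ _ huv hn) (dT _ _ hw hm) (key w hw).2.
  have hwG := arcG2 hw; have hwv : vld w by rewrite /vld GMx.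
  have := H w (dd v) (dd w) hw (distT' hvv) (distT' hwv).
  by rewrite ddv ddG_dd // GMx.
Qed.

End S.

Theorem lemma3p5 (T : btree) (G : ograph) :
  burling_tree T -> derived_from G T ->
  exists T' : btree,
    [/\ burling_tree T', derived_from G T',
        (forall v, v \in bvert T' ->
           (v \in gvert G <-> ~~ ((v == broot T') || is_last_born T' v))) &
        (forall u v, garc G u v ->
           (top_arc G T u v <-> top_arc G T' u v) /\
           (bottom_arc G T u v <-> bottom_arc G T' u v))].
Proof.
move=> hT hG; exists (@T' T G hT); split.
- exact: burT'.
- exact: derT'.
- exact: cond3.
- exact: topbot.
Qed.
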